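(* Let $r\geq 1$ and let $G$ be the complete $r$-partite graph with (nonempty) stable parts $V_1,\dots,V_r$, where $|V_i|\geq|V_{i+1}|$ for all $i\in\{1,\dots,r-1\}$. Define $s_r=|V_r|$ and, for $i=r-1,r-2,\dots,1$, $s_i=\max\{1+s_{i+1},|V_i|\}$. Then \[\eta(G)=\max\Bigl\{\Bigl\lceil \tfrac{s_i}{|V_i|}\Bigr\rceil : i\in\{1,\dots,r\}\Bigr\}.\] Moreover, $\eta(G)\leq r$.
   Context: All graphs are finite, simple and undirected. The complete $r$-partite graph with parts $V_1,\dots,V_r$ has vertex set $V_1\cup\cdots\cup V_r$ (disjoint), each $V_i$ stable, and every two vertices in different parts adjacent. For a vertex $v$, $N(v)$ is its set of neighbours. For a positive integer $k$, $[k]=\{1,\dots,k\}$. For a labeling $f:V(G)\to[k]$ and $S\subseteq V(G)$, $f(S)=\sum_{u\in S}f(u)$. A labeling $f:V(G)\to[k]$ is an additive $k$-coloring if $f(N(u))\neq f(N(v))$ for every edge $(u,v)$ of $G$. The additive chromatic number $\eta(G)$ is the least $k$ for which $G$ has an additive $k$-coloring. *)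

(* Defs.v *)
From mathcomp Require Import all_boot.
Set Implicit Arguments. Unset Strict Implicit. Unset Printing Implicit Defensive.

(* A complete r-partite graph on a finite vertex type T is given by the map
   part : T -> 'I_r sending each vertex to the index of its part; two vertices
   are adjacent iff they lie in different parts. *)
Definition kp_adj (T : finType) (r : nat) (part : T -> 'I_r) : rel T :=
  fun u v => part u != part v.

Definition kp_nbhd (T : finType) (r : nat) (part : T -> 'I_r) (v : T) : {set T} :=
  [set u | kp_adj part u v].

Definition label_sum (T : finType) (f : T -> nat) (S : {set T}) : nat :=
  \sum_(u in S) f u.

Definition additive_coloring (T : finType) (e : rel T) (k : nat) (f : T -> nat) :=
  (forall v, 1 <= f v <= k) /\
  (forall u v, e u v ->
     label_sum f [set w | e w u] <> label_sum f [set w | e w v]).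

Definition eta_is (T : finType) (e : rel T) (k : nat) :=
  (exists f, additive_coloring e k f) /\
  (forall k' f, additive_coloring e k' f -> k <= k').

(* |V_i| (0-indexed parts, i < r) *)
Definition part_size (T : finType) (r : nat) (part : T -> 'I_r) (i : nat) : nat :=
  #|[set x | val (part x) == i]|.

(* s_fuel sz r m = s_{r-1-m} (0-indexed): s_{r-1} = sz (r-1),
   s_j = max (1 + s_{j+1}) (sz j). *)
Fixpoint s_fuel (sz : nat -> nat) (r : nat) (m : nat) : nat :=
  match m with
  | 0 => sz r.-1
  | m'.+1 => maxn (1 + s_fuel sz r m') (sz (r - 2 - m'))
  end.

Definition s_seq (sz : nat -> nat) (r : nat) (i : nat) : nat := s_fuel sz r (r.-1 - i).

(* ceiling division for b > 0 *)
Definition ceil_div (a b : nat) : nat := (a + b).-1 %/ b.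

(* Main.v *)
Require Import Defs.
From mathcomp Require Import all_boot zify.
Set Implicit Arguments. Unset Strict Implicit. Unset Printing Implicit Defensive.

Lemma ceilP a b k : 0 < b -> (ceil_div a b <= k) = (a <= k * b).
Proof.
move=> hb; rewrite /ceil_div -ltnS ltn_divLR // mulSn.
apply/idP/idP; lia.
Qed.

Lemma s_char sz r m : m < r ->
  exists2 j, r.-1 - m <= j < r & s_fuel sz r m = sz j + (j - (r.-1 - m)).
Proof.
elim: m => [|m IH] hm /=.
  exists r.-1; first lia. rewrite subn0; lia.
have [j hj ->] := IH (ltnW hm).
have -> : r - 2 - m = r.-1 - m.+1 by lia.
case: (leqP (1 + (sz j + (j - (r.-1 - m)))) (sz (r.-1 - m.+1))) => h.
  exists (r.-1 - m.+1); first lia. lia.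
exists j; first lia. lia.
Qed.

Lemma s_char2 sz r i : i < r ->
  exists2 j, i <= j < r & s_seq sz r i = sz j + (j - i).
Proof.
move=> hi; rewrite /s_seq.
have [j hj ->] := @s_char sz r (r.-1 - i) ltac:(lia).
exists j; first lia. congr (_ + (_ - _)); lia.
Qed.

Lemma s_dec sz r i : i.+1 < r -> s_seq sz r i.+1 < s_seq sz r i.
Proof.
move=> h; rewrite /s_seq.
have -> : r.-1 - i = (r.-1 - i.+1).+1 by lia.
rewrite /= leq_max; apply/orP; left; by rewrite add1n.
Qed.

Lemma s_ge sz r i : i < r -> sz i <= s_seq sz r i.
Proof.
move=> h; rewrite /s_seq.
case E: (r.-1 - i) => [|m] /=.
  have -> : r.-1 = i by lia. by [].
have -> : r - 2 - m = i by lia. exact: leq_maxr.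
Qed.

Lemma s_inj sz r d i : i + d.+1 < r -> s_seq sz r (i + d.+1) < s_seq sz r i.
Proof.
elim: d => [|d IH] h; first by rewrite addn1 s_dec // -addn1.
apply: ltn_trans (IH ltac:(lia)).
rewrite addnS; apply: s_dec; lia.
Qed.

Lemma sz_mono (sz : nat -> nat) r :
  (forall i, i.+1 < r -> sz i.+1 <= sz i) ->
  forall d i, i + d < r -> sz (i + d) <= sz i.
Proof.
move=> H; elim=> [|d IH] i h; first by rewrite addn0.
apply: leq_trans (IH i ltac:(lia)). rewrite addnS; apply: H; lia.
Qed.

Lemma sum_index (T : eqType) (s : seq T) m : uniq s -> m <= size s ->
  \sum_(x <- s) (index x s < m) = m.
Proof.
elim: s m => [|y s IH] m /=; first by rewrite big_nil; case: m.
move=> /andP[ys us] hm; rewrite big_cons eqxx.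
case: m hm => [|m] hm.
  rewrite big1 // => x _; by rewrite ltn0.
transitivity (1 + \sum_(x <- s) (index x s < m)); last by rewrite IH // add1n.
congr (_ + _).
apply: eq_big_seq => x xs.
have -> : (y == x) = false by apply/eqP => yx; rewrite yx xs in ys.
by [].
Qed.

Definition Pset (T : finType) r (part : T -> 'I_r) (i : nat) : {set T} :=
  [set x | nat_of_ord (part x) == i].

Lemma nbhd_split (T : finType) r (part : T -> 'I_r) (f : T -> nat) u :
  label_sum f [set w | kp_adj part w u] + label_sum f (Pset part (part u))
  = \sum_x f x.
Proof.
rewrite /label_sum [RHS](bigID (fun x => part x != part u)) /=.
congr (_ + _); apply: eq_bigl => x; rewrite inE //.
by rewrite negbK.
Qed.

Lemma lab a n K (c : bool) : 0 < n -> n <= a -> a <= K * n ->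
  (c -> 0 < a %% n) -> 1 <= a %/ n + c <= K.
Proof.
move=> hn hna haK hc.
have e := divn_eq a n.
have hq : 0 < a %/ n by rewrite divn_gt0.
have hr : a %% n < n by rewrite ltn_pmod.
move: hc; case: c => [hc|_] /=.
  have hc' := hc isT. nia.
nia.
Qed.

Theorem mainTheorem3 (r : nat) (T : finType) (part : T -> 'I_r) :
  1 <= r ->
  (forall i : 'I_r, exists x : T, part x = i) ->
  (forall i : nat, i.+1 < r -> part_size part i.+1 <= part_size part i) ->
  eta_is (kp_adj part)
    (\max_(i < r) ceil_div (s_seq (part_size part) r i) (part_size part i))
  /\ \max_(i < r) ceil_div (s_seq (part_size part) r i) (part_size part i) <= r.
Proof.
move=> r1 surj mono.
have npos : forall i, i < r -> 0 < part_size part i.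
  move=> i hi; have [x hx] := surj (Ordinal hi); apply/card_gt0P; exists x.
  by rewrite inE hx.
have nmono : forall i j, i <= j < r -> part_size part j <= part_size part i.
  move=> i j hij; have := @sz_mono (part_size part) r mono (j - i) i.
  have -> : i + (j - i) = j by lia. move=> H; apply: H; lia.
have sle : forall i, i < r -> s_seq (part_size part) r i <=
   (\max_(i < r) ceil_div (s_seq (part_size part) r i) (part_size part i))
    * part_size part i.
  move=> i hi; rewrite -ceilP; last exact: npos.
  have := @leq_bigmax _ (fun i : 'I_r => ceil_div (s_seq (part_size part) r i) (part_size part i)) (Ordinal hi).
  exact.
have sinj : forall i j, i < r -> j < r -> i != j ->
    s_seq (part_size part) r i != s_seq (part_size part) r j.
  move=> i j hi hj; case: (ltngtP i j) => // h _.
    have := @s_inj (part_size part) r (j - i).-1 i.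
    have -> : i + (j - i).-1.+1 = j by lia. move=> H; have := H hj.
    by rewrite ltn_neqAle eq_sym => /andP[].
  have := @s_inj (part_size part) r (i - j).-1 j.
  have -> : j + (i - j).-1.+1 = i by lia. move=> H; have := H hi.
  by rewrite ltn_neqAle => /andP[].
set n := part_size part in npos nmono sle sinj *.
set s := s_seq n r in sle sinj *.
set K := \max_(i < r) _ in sle *.
split; last first.
  apply/bigmax_leqP => i _; rewrite ceilP; last exact: npos.
  rewrite /s; have [j hj ->] := s_char2 n (ltn_ord i).
  have h1 := nmono i j ltac:(lia). have h2 := npos i (ltn_ord i). nia.
split.
  pose f x := s (part x) %/ n (part x)
       + (index x (enum (Pset part (part x))) < s (part x) %% n (part x)).
  have Gf : forall i, i < r -> label_sum f (Pset part i) = s i.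
    move=> i hi; rewrite /label_sum.
    transitivity (\sum_(x in Pset part i)
       (s i %/ n i + (index x (enum (Pset part i)) < s i %% n i))).
      by apply: eq_bigr => x; rewrite inE => /eqP e; rewrite /f e.
    rewrite big_split /= sum_nat_const -big_enum /= sum_index ?enum_uniq //.
      by rewrite mulnC -divn_eq.
    by rewrite -cardE ltnW // ltn_pmod // npos.
  exists f; split.
    move=> v; rewrite /f; apply: lab.
    - exact: npos.
    - exact: s_ge.
    - exact: sle.
    - move=> h; apply: leq_ltn_trans h.  exact: leq0n.
  move=> u v huv.
  have eu := @nbhd_split _ _ part f u. have ev := @nbhd_split _ _ part f v.
  rewrite (Gf _ (ltn_ord _)) in eu. rewrite (Gf _ (ltn_ord _)) in ev.
  have := sinj (part u) (part v) (ltn_ord _) (ltn_ord _) huv.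
  move=> hne e; move: hne; rewrite (_ : s (part u) = s (part v)) ?eqxx //; lia.
move=> k' g [hl hadj].
pose G l := label_sum g (Pset part l).
have Gdist : forall l l', l < r -> l' < r -> l != l' -> G l != G l'.
  move=> l l' hl1 hl2 hll; have [x hx] := surj (Ordinal hl1).
  have [y hy] := surj (Ordinal hl2).
  have hxy : kp_adj part x y by rewrite /kp_adj hx hy; apply: contra hll => /eqP [->].
  have := hadj x y hxy.
  have ex := @nbhd_split _ _ part g x. have ey := @nbhd_split _ _ part g y.
  rewrite hx /= in ex. rewrite hy /= in ey.
  move=> hne; apply/eqP => e; apply: hne. rewrite /G in e. lia.
have Gb : forall l, n l <= G l <= k' * n l.
  move=> l; apply/andP; split.
    rewrite /n /part_size /G /label_sum -sum1_card.
    apply: leq_sum => x _; by case/andP: (hl x).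
  rewrite /G /label_sum mulnC -sum_nat_const.
  apply: leq_sum => x _; by case/andP: (hl x).
apply/bigmax_leqP => i _; rewrite ceilP; last exact: npos.
rewrite /s; have [j hj ->] := s_char2 n (ltn_ord i).
case: (boolP (has (fun l => n j + (j - i) <= G l) (iota i (j - i).+1))).
  move/hasP => [l]; rewrite mem_iota => hli hge.
  apply: leq_trans hge _. have := Gb l. case/andP => _ h.
  apply: leq_trans h _. rewrite leq_mul2l; apply/orP; right. apply: nmono. lia.
move/hasPn => hall; exfalso.
have := @uniq_leq_size _ [seq G l | l <- iota i (j - i).+1] (iota (n j) (j - i)).
rewrite size_map !size_iota ltnn => H; suff: false by []; apply: H.
  rewrite map_inj_in_uniq ?iota_uniq // => a b; rewrite !mem_iota => ha hb e.
  case: (eqVneq a b) => // /(Gdist a b ltac:(lia) ltac:(lia)); by rewrite e eqxx.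
move=> y /mapP [l hl0 ->]; rewrite mem_iota.
have := hall l hl0; move: hl0; rewrite mem_iota => hl0 /= hn.
have := Gb l; case/andP => h1 _. have := nmono l j ltac:(lia). lia.
Qed.
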